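(* There is a function $C(t,\epsilon)$ such that the following holds for every positive integer $t$ and every $\epsilon\in(0,1)$: let $G$ be a connected balanced bipartite graph with parts $X,Y$ each of order $n$, with $\delta(G)\geq C(t,\epsilon)$ and with no induced $S_{t,t}$. Then \[|U_X(\epsilon)|,\ |U_Y(\epsilon)|\leq \frac{C(t,\epsilon)}{\delta(G)}\,n.\]
   Context: For positive integers $a,b$, the biclaw $S_{a,b}$ is the graph with vertex set $\{x,x_1,\dots,x_a,y,y_1,\dots,y_b\}$ and edges $xy$, $xy_1,\dots,xy_b$, $yx_1,\dots,yx_a$; ''no induced $S_{t,t}$'' means no induced subgraph isomorphic to $S_{t,t}$. For a bipartite graph with parts $X,Y$, $\Delta_X=\max_{x\in X} d(x)$, $\Delta_Y=\max_{y\in Y}d(y)$, and for $\epsilon\in(0,1)$, $U_X(\epsilon)=\{x\in X: d(x)\leq (1-\epsilon)\Delta_X\}$, $U_Y(\epsilon)=\{y\in Y: d(y)\leq(1-\epsilon)\Delta_Y\}$. $\delta(G)$ is the minimum degree. *)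

(* Defs.v *)
From mathcomp Require Import all_boot all_order all_algebra.
Set Implicit Arguments. Unset Strict Implicit. Unset Printing Implicit Defensive.
Import Order.TTheory GRing.Theory Num.Theory.

Definition simple_graph (V : finType) (e : rel V) : Prop :=
  symmetric e /\ irreflexive e.

Definition deg (V : finType) (e : rel V) (v : V) : nat := #|[set w | e v w]|.

(* Minimum degree delta(G) (for nonempty V this is the true minimum, since
   every degree is <= #|V|). *)
Definition mindeg (V : finType) (e : rel V) : nat :=
  \big[minn/#|V|]_(v : V) deg e v.

Definition maxdeg_in (V : finType) (e : rel V) (A : {set V}) : nat :=
  \max_(v in A) deg e v.

Definition bipartite_parts (V : finType) (e : rel V) (X Y : {set V}) : Prop :=
  [disjoint X & Y] /\ X :|: Y = setT /\
  (forall u v, e u v -> (u \in X /\ v \in Y) \/ (u \in Y /\ v \in X)).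

Definition connected (V : finType) (e : rel V) : Prop :=
  forall u v : V, connect e u v.

(* Vertex set of the biclaw S_{a,b}:
   inl true = x, inl false = y, inr (inl i) = x_i, inr (inr j) = y_j. *)
Definition biclaw_V (a b : nat) : finType := (bool + ('I_a + 'I_b))%type.

(* Edges: xy, x y_j (all j), y x_i (all i). *)
Definition biclaw_adj (a b : nat) (u v : biclaw_V a b) : bool :=
  match u, v with
  | inl b1, inl b2 => b1 != b2
  | inl true, inr (inr _) => true
  | inr (inr _), inl true => true
  | inl false, inr (inl _) => true
  | inr (inl _), inl false => true
  | _, _ => false
  end.

Definition has_induced_biclaw (V : finType) (e : rel V) (a b : nat) : Prop :=
  exists f : biclaw_V a b -> V, injective f /\
    forall u v, e (f u) (f v) = biclaw_adj u v.

Definition U_low (R : realFieldType) (V : finType) (e : rel V) (A : {set V})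
  (eps : R) : {set V} :=
  [set v in A | ((deg e v)%:R <= (1 - eps) * (maxdeg_in e A)%:R)%R].

(* Main.v *)
Require Import Defs.
From mathcomp Require Import all_boot all_order all_algebra.
From mathcomp Require Import zify.
Import Order.TTheory GRing.Theory Num.Theory.
Set Implicit Arguments. Unset Strict Implicit. Unset Printing Implicit Defensive.

Lemma card_sep_sum (T : finType) (C : {set T}) (P : pred T) :
  #|[set x in C | P x]| = \sum_(x in C) (P x : nat).
Proof.
rewrite -sum1_card big_mkcond /= [RHS]big_mkcond /=; apply: eq_bigr => x _.
by rewrite inE; case: (x \in C); case: (P x).
Qed.

Lemma double_count (T : finType) (A B : {set T}) (r : rel T) :
  \sum_(a in A) #|[set b in B | r a b]| = \sum_(b in B) #|[set a in A | r a b]|.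
Proof.
under eq_bigr do rewrite card_sep_sum.
rewrite exchange_big /=; apply: eq_bigr => b _.
by rewrite card_sep_sum.
Qed.

Lemma arG (s r w z q t K d : nat) : (d <= s -> 6 * K <= d -> 2 * q * t <= K -> 4 <= q ->
  w <= z -> w + r = s -> z < 2 * q * t -> q * r < s -> False)%N.
Proof.
move=> h1 h2 h3 h4 h5 h6 h7 h8.
have e1 : (4 * r <= q * r)%N by rewrite leq_mul2r h4 orbT.
move: h3 h7; rewrite -mulnA; set qt := (q * t)%N => h3 h7.
lia.
Qed.
Lemma arA (s q t K d : nat) : (d <= s -> 6 * K <= d -> 2 * q * t <= K -> 2 * q * t <= s)%N.
Proof. move: (2 * q * t)%N => m; lia. Qed.
Lemma arB (x w z q t K d : nat) : (d <= x -> 6 * K <= d -> 2 * q * t <= K -> z < 2 * q * t ->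
  w + z = x -> 2 * q * t <= w)%N.
Proof. move: (2 * q * t)%N => m; lia. Qed.
Lemma arC (u b1 b2 K d : nat) : (d <= u -> 6 * K <= d -> b1 < K -> b2 < K -> u <= b1 + b2 -> False)%N.
Proof. lia. Qed.

Section Comb.
Variable V : finType.
Variable e : rel V.
Hypothesis esym : symmetric e.
Hypothesis eirr : irreflexive e.
Variables P Q : {set V}.
Hypothesis hdis : [disjoint P & Q].
Hypothesis hbip : forall u v, e u v -> (u \in P /\ v \in Q) \/ (u \in Q /\ v \in P).
Variable t : nat.
Hypothesis tpos : (0 < t)%N.
Hypothesis nobic : ~ has_induced_biclaw e t t.

Definition nb (v : V) : {set V} := [set w | e v w].

Lemma PQF x : x \in P -> x \in Q -> False.
Proof.
move=> xP xQ; have := disjoint_setI0 hdis; move/setP/(_ x).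
by rewrite !inE xP xQ.
Qed.

Lemma nbPQ u v : u \in P -> e u v -> v \in Q.
Proof. by move=> uP /hbip [[]|[uQ]] // _; case: (PQF uP uQ). Qed.
Lemma nbQP u v : u \in Q -> e u v -> v \in P.
Proof. by move=> uQ /hbip [[uP]|[]] // _; case: (PQF uP uQ). Qed.

Lemma notri u v w : e u v -> e v w -> ~~ e u w.
Proof.
move=> uv vw; apply/negP => uw.
case: (hbip uv) => [[uP vQ]|[uQ vP]].
- have wP := nbQP vQ vw; have wQ := nbPQ uP uw; exact: PQF wP wQ.
- have wQ := nbPQ vP vw; have wP := nbQP uQ uw; exact: PQF wP wQ.
Qed.

Lemma mk_biclaw x y (As Bs : {set V}) : e x y -> (t <= #|As|)%N -> (t <= #|Bs|)%N ->
  (forall a, a \in As -> e y a) -> (forall b, b \in Bs -> e x b) ->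
  (forall a b, a \in As -> b \in Bs -> ~~ e a b) -> False.
Proof.
move=> exy hA hB hyA hxB hAB.
pose sA := enum As; pose sB := enum Bs.
have szA : (t <= size sA)%N by rewrite -cardE.
have szB : (t <= size sB)%N by rewrite -cardE.
pose a (i : 'I_t) := nth x sA i.
pose b (j : 'I_t) := nth y sB j.
have aA i : a i \in As by rewrite -mem_enum mem_nth // (leq_trans (ltn_ord i)).
have bB j : b j \in Bs by rewrite -mem_enum mem_nth // (leq_trans (ltn_ord j)).
have ya i : e y (a i) := hyA _ (aA i).
have xb j : e x (b j) := hxB _ (bB j).
have nab i j : ~~ e (a i) (b j) := hAB _ _ (aA i) (bB j).
have yx : e y x by rewrite esym.
have ainj i i' : a i = a i' -> i = i'.
  move=> h; apply: val_inj; apply/eqP.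
  by rewrite -(nth_uniq x (leq_trans (ltn_ord i) szA) (leq_trans (ltn_ord i') szA) (enum_uniq _)); apply/eqP; exact: h.
have binj i i' : b i = b i' -> i = i'.
  move=> h; apply: val_inj; apply/eqP.
  by rewrite -(nth_uniq y (leq_trans (ltn_ord i) szB) (leq_trans (ltn_ord i') szB) (enum_uniq _)); apply/eqP; exact: h.
pose i0 := Ordinal tpos.
clearbody a b.
pose f (u : biclaw_V t t) : V :=
  match u with
  | inl true => x | inl false => y
  | inr (inl i) => a i | inr (inr j) => b j end.
have xa i : ~~ e x (a i) := notri exy (ya i).
have yb j : ~~ e y (b j) := notri yx (xb j).
have aa i i' : ~~ e (a i) (a i') by apply: notri (ya i'); rewrite esym.
have bb j j' : ~~ e (b j) (b j') by apply: notri (xb j'); rewrite esym.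
apply: nobic; exists f; split.
- move=> [[]|[i|i]] [[]|[i'|i']] //= h.
  + by move: exy; rewrite h eirr.
  + by move: (nab i' i0); rewrite -h xb.
  + by move: (xb i'); rewrite h eirr.
  + by move: exy; rewrite h eirr.
  + by move: (ya i'); rewrite h eirr.
  + by move: (nab i0 i'); rewrite -h esym ya.
  + by move: (nab i i0); rewrite h xb.
  + by move: (ya i); rewrite h eirr.
  + by rewrite (ainj _ _ h).
  + by move: (xa i); rewrite h xb.
  + by move: (xb i); rewrite h eirr.
  + by move: (nab i0 i); rewrite h esym ya.
  + by move: (xa i'); rewrite -h xb.
  + by rewrite (binj _ _ h).
- move=> [[]|[i|i]] [[]|[i'|i']] /=.
  all: rewrite ?eirr ?exy ?yx ?xb ?ya ?(negbTE (xa _)) ?(negbTE (yb _)) ?(negbTE (aa _ _)) ?(negbTE (bb _ _)) ?(negbTE (nab _ _)) //.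
  all: rewrite esym ?exy ?yx ?xb ?ya ?(negbTE (xa _)) ?(negbTE (yb _)) ?(negbTE (nab _ _)) //.
Qed.


Variable q : nat.
Hypothesis q1 : (0 < q)%N.
Definition Kc := (t * (2 * q) ^ t)%N.

Lemma Kc_pos : (0 < Kc)%N.
Proof. by rewrite /Kc muln_gt0 tpos expn_gt0 muln_gt0 q1. Qed.

Lemma Fl x y (S : {set V}) : e x y -> S \subset nb x -> (2 * q * t <= #|S|)%N ->
  (#|[set a in nb y | #|S| <= q * #|S :\: nb a|]| < Kc)%N.
Proof.
move=> exy Sx hS.
set Bad := [set a in nb y | _].
rewrite ltnNge; apply/negP => hK.
suff H : forall k, (k <= t)%N -> exists T : {set V}, [/\ T \subset S, #|T| = k &
   (#|Bad| <= #|[set a in Bad | [disjoint T & nb a]]| * (2 * q) ^ k)%N].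
  have [T [TS cT hT]] := H t (leqnn t).
  apply: (@mk_biclaw x y [set a in Bad | [disjoint T & nb a]] T exy).
  - rewrite -(@leq_pmul2r ((2 * q) ^ t)); last by rewrite expn_gt0 muln_gt0 q1.
    exact: leq_trans hK hT.
  - by rewrite cT.
  - by move=> a; rewrite !inE => /andP [/andP [] ].
  - by move=> b /(subsetP TS) /(subsetP Sx); rewrite inE.
  - move=> a b; rewrite inE => /andP [_ hd] bT.
    by move: (disjointFr hd bT); rewrite inE => ->.
elim=> [_|k IH hk].
  exists set0; split; rewrite ?sub0set ?cards0 // expn0 muln1.
  apply: subset_leq_card; apply/subsetP => a aB; rewrite inE aB /=.
  by rewrite -setI_eq0 set0I.
have [T [TS cT hT]] := IH (ltnW hk).
set Pk := [set a in Bad | [disjoint T & nb a]] in hT *.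
set R := S :\: T.
have Kle : (Kc <= #|Pk| * (2 * q) ^ k)%N := leq_trans hK hT.
have Pk_pos : (0 < #|Pk|)%N.
  move: Kle Kc_pos; case: #|Pk| => // ; rewrite mul0n leqn0 => /eqP ->.
  done.
have cR : #|R| = (#|S| - k)%N.
  by rewrite /R cardsD (setIidPr TS) cT.
have miss : forall a, a \in Pk -> (#|S| <= 2 * q * #|R :\: nb a|)%N.
  move=> a; rewrite inE => /andP [aB hd].
  move: aB; rewrite inE => /andP [_ hSa].
  have TSa : T \subset S :\: nb a.
    apply/subsetP => z zT; rewrite in_setD (subsetP TS _ zT) andbT.
    by rewrite (disjointFr hd zT).
  have e1 : R :\: nb a = (S :\: nb a) :\: T.
    by apply/setP => z; rewrite /R !inE; case: (z \in T); case: (e a z).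
  have e2 : #|R :\: nb a| = (#|S :\: nb a| - k)%N by rewrite e1 cardsD (setIidPr TSa) cT.
  have e3 : (k <= #|S :\: nb a|)%N by rewrite -cT subset_leq_card.
  rewrite e2. move: hSa e3 hS hk. set m := #|S :\: nb a|. set s := #|S|. nia.
pose cnt b := #|[set a in Pk | b \notin nb a]|.
have [b bR hb] : exists2 b, b \in R & (#|Pk| <= 2 * q * cnt b)%N.
  case: (boolP [exists b in R, #|Pk| <= 2 * q * cnt b]%N).
    by move=> /existsP [b /andP [bR hb]]; exists b.
  move=> /existsPn hall; exfalso.
  have h1 : (\sum_(b in R) (2 * q * cnt b + 1) <= \sum_(b in R) #|Pk|)%N.
    apply: leq_sum => b bR; move: (hall b); rewrite bR /= -ltnNge addn1; done.
  rewrite sum_nat_const big_split /= sum_nat_const -big_distrr /= in h1.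
  have h2 : (\sum_(b in R) cnt b = \sum_(a in Pk) #|R :\: nb a|)%N.
    rewrite /cnt -(double_count Pk R (fun a b => b \notin nb a)).
    apply: eq_bigr => a _; apply: eq_card => z; rewrite !inE; by rewrite andbC.
  have h3 : (#|Pk| * #|S| <= 2 * q * \sum_(a in Pk) #|R :\: nb a|)%N.
    rewrite big_distrr /= -sum_nat_const; apply: leq_sum => a aP; exact: miss.
  rewrite h2 in h1.
  have hR : (0 < #|R|)%N by rewrite cR subn_gt0; move: hS hk; nia.
  move: h1 h3 hR; rewrite cR. set X1 := (\sum_(a in Pk) _)%N. move: Pk_pos. set p := #|Pk|. nia.
exists (b |: T); split.
- by rewrite subUset sub1set TS andbT; move: bR; rewrite inE => /andP [].
- by rewrite cardsU1 cT; move: bR; rewrite inE => /andP [-> _].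
- have -> : [set a in Bad | [disjoint b |: T & nb a]] = [set a in Pk | b \notin nb a].
    apply/setP => a; rewrite !inE (@eq_disjoint _ _ (predU1 b (mem T))); last by move=> z; rewrite !inE.
    rewrite disjointU1 inE.
    case: (e y a) => //=; case: (_ <= _)%N => //=; by rewrite andbC.
  rewrite expnS; apply: (leq_trans hT); rewrite -/(cnt b).
  move: hb; set c := cnt b; set w := ((2 * q) ^ k)%N; set p := #|Pk|; nia.
Qed.

Hypothesis q4 : (4 <= q)%N.
Variable delta : nat.
Hypothesis hdeg : forall v, (delta <= #|nb v|)%N.
Hypothesis hdelta : (6 * Kc <= delta)%N.
Hypothesis conn : forall u v : V, connect e u v.
Variable p0 : V.
Hypothesis p0P : p0 \in P.

Let B := nb p0.
Let D := #|B|.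

Lemma Kc_ge : (2 * q * t <= Kc)%N.
Proof.
rewrite /Kc; have : (2 * q <= (2 * q) ^ t)%N.
  by rewrite -{1}(expn1 (2 * q)) leq_pexp2l // muln_gt0 q1.
move: q1 tpos; set w := ((2 * q) ^ t)%N; nia.
Qed.

Lemma D_ge : (6 * Kc <= D)%N.
Proof. exact: leq_trans hdelta (hdeg p0). Qed.

Definition As := [set a in P | q * #|B :\: nb a| < #|B|]%N.
Definition Aw := [set a in P | #|B| <= 2 * #|B :&: nb a|]%N.
Definition Ys := [set y in Q | [exists h in As, e h y]].

Lemma W_small : (#|Aw :\: As| <= 2 * Kc)%N.
Proof.
set W := Aw :\: As.
have hD := D_ge; have hk := Kc_ge; have kp := Kc_pos.
have Dpos : (0 < D)%N by move: hD kp; nia.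
have hb : forall b, b \in B -> (#|[set a in W | e a b]| < Kc)%N.
  move=> b bB.
  have epb : e p0 b by move: bB; rewrite /B inE.
  have hB2 : (2 * q * t <= #|B|)%N by move: hD hk; rewrite /D; nia.
  have := @Fl p0 b B epb (subxx _) hB2.
  apply: leq_ltn_trans; apply: subset_leq_card; apply/subsetP => a.
  rewrite !inE => /andP [/andP [aAs /andP [aP _]] eab].
  rewrite esym eab /=; move: aAs; rewrite aP /= -leqNgt; done.
have h1 := double_count W B (fun a b => e a b).
have h2 : (\sum_(b in B) #|[set a in W | e a b]| <= #|B| * Kc)%N.
  rewrite -sum_nat_const; apply: leq_sum => b bB; exact: ltnW (hb b bB).
have h3 : (#|W| * #|B| <= 2 * \sum_(a in W) #|[set b in B | e a b]|)%N.
  rewrite big_distrr /= -sum_nat_const; apply: leq_sum => a.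
  rewrite !inE => /andP [_ /andP [_ ha]].
  by rewrite (_ : [set b in B | e a b] = B :&: nb a) //; apply/setP => z; rewrite !inE.
rewrite h1 in h3.
move: h2 h3 Dpos; rewrite -/D; set s := (\sum_(b in B) _)%N; set w := #|W|; nia.
Qed.

Lemma closure y h : h \in As -> e h y -> (#|nb y :\: As| < 3 * Kc)%N.
Proof.
move=> hA ehy.
have hD := D_ge; have hk := Kc_ge; have kp := Kc_pos.
have hP : h \in P by move: hA; rewrite inE => /andP [].
have hq : (q * #|B :\: nb h| < D)%N by move: hA; rewrite inE => /andP [].
set S := B :&: nb h.
have cS : (#|S| + #|B :\: nb h| = D)%N by rewrite cardsID.
have hS : (2 * q * t <= #|S|)%N.
  move: hq cS hD hk q4; set m := #|B :\: nb h|; set s := #|S|; nia.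
have := @Fl h y S ehy (subsetIr _ _) hS.
set Bad := [set a in nb y | _].
move=> hBad.
have sub : nb y :\: As \subset Bad :|: (Aw :\: As).
  apply/subsetP => a; rewrite in_setD => /andP [aAs ay].
  rewrite in_setU; case: (boolP (a \in Bad)) => //= aB.
  rewrite in_setD aAs /=.
  have aP : a \in P by apply: nbQP (nbPQ hP ehy) _; move: ay; rewrite inE.
  have hSa : (q * #|S :\: nb a| < #|S|)%N.
    by move: aB; rewrite inE ay /= -ltnNge.
  have sub2 : B :\: nb a \subset (B :\: nb h) :|: (S :\: nb a).
    apply/subsetP => z; rewrite !inE.
    by case: (e p0 z); case: (e h z); case: (e a z).
  have c2 := subset_leq_card sub2.
  have c3 := leq_trans c2 (leq_card_setU _ _).
  have c4 : (#|B :&: nb a| + #|B :\: nb a| = D)%N by rewrite cardsID.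
  rewrite inE aP /=.
  move: c3 c4 hSa hq cS q4.
  set m := #|B :\: nb h|; set s := #|S|; set r := #|S :\: nb a|; set u := #|B :\: nb a|.
  set v := #|B :&: nb a|. rewrite -/D. nia.
have := leq_trans (subset_leq_card sub) (leq_card_setU _ _).
have := W_small; move: hBad; nia.
Qed.

Definition GP (x : V) := [exists z in Ys, e x z].

Lemma typeI x : GP x -> (#|nb x :\: Ys| < 2 * q * t)%N.
Proof.
move=> /existsP [yg /andP [ygY exyg]].
have hk := Kc_ge; have kp := Kc_pos.
rewrite ltnNge; apply/negP => hS.
have := @Fl x yg (nb x :\: Ys) exyg (subsetDl _ _) hS.
set Bad := [set a in nb yg | _] => hBad.
have [h hA ehy] : exists2 h, h \in As & e h yg.
  by move: ygY; rewrite inE => /andP [_ /existsP [h /andP [hA ehy]]]; exists h.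
have hcl := closure hA ehy.
have sub : nb yg :&: As \subset Bad.
  apply/subsetP => a; rewrite in_setI => /andP [ay aA].
  rewrite inE ay /=.
  have -> : (nb x :\: Ys) :\: nb a = nb x :\: Ys.
    apply/setP => z; rewrite !inE.
    case: (boolP (e a z)) => //= eaz.
    have aP : a \in P by move: aA; rewrite inE => /andP [].
    rewrite (nbPQ aP eaz) /=.
    have -> : [exists h0 in As, e h0 z] by apply/existsP; exists a; rewrite aA eaz.
    done.
  by rewrite leq_pmull.
have c1 := subset_leq_card sub.
have c2 : (#|nb yg :&: As| + #|nb yg :\: As| = #|nb yg|)%N by rewrite cardsID.
have := hdeg yg; move: c1 c2 hBad hcl hdelta; nia.
Qed.

Definition Gd : pred V := fun v =>
  ((v \in P) && GP v) || ((v \in Q) && [exists u, [&& u \in P, GP u & e u v]]).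

Lemma Gstep u v : e u v -> Gd u -> Gd v.
Proof.
move=> euv /orP [/andP [uP gu]|/andP [uQ /existsP [x /and3P [xP gx exu]]]].
  apply/orP; right; rewrite (nbPQ uP euv) /=; apply/existsP; exists u.
  by rewrite uP gu euv.
have vP := nbQP uQ euv.
apply/orP; left; rewrite vP /=.
case: (boolP (GP v)) => // ngv; exfalso.
have hk := Kc_ge; have kp := Kc_pos.
have evu : e v u by rewrite esym.
have hS1 : (2 * q * t <= #|nb v|)%N := arA (hdeg v) hdelta hk.
have := @Fl v u (nb v) evu (subxx _) hS1.
set Bad1 := [set a in nb u | _] => hB1.
have hx := typeI gx.
set S2 := nb x :&: Ys.
have c2 : (#|S2| + #|nb x :\: Ys| = #|nb x|)%N by rewrite cardsID.
have hS2 : (2 * q * t <= #|S2|)%N := arB (hdeg x) hdelta hk hx c2.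
have := @Fl x u S2 exu (subsetIl _ _) hS2.
set Bad2 := [set a in nb u | _] => hB2.
have : ~~ (nb u \subset Bad1 :|: Bad2).
  apply/negP => sub; have := leq_trans (subset_leq_card sub) (leq_card_setU _ _).
  exact: arC (hdeg u) hdelta hB1 hB2.
case/subsetPn => a au; rewrite in_setU negb_or => /andP [na1 na2].
have ea : e u a by move: au; rewrite inE.
have aP : a \in P by move: (nbQP uQ ea) => ->.
have h1 : (q * #|nb v :\: nb a| < #|nb v|)%N by move: na1; rewrite inE au /= -ltnNge.
have h2 : (q * #|S2 :\: nb a| < #|S2|)%N by move: na2; rewrite inE au /= -ltnNge.
have ga : GP a.
  case: (boolP (GP a)) => // nga; exfalso.
  have : S2 :\: nb a = S2.
    apply/setP => z; rewrite in_setD in_setI.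
    case: (boolP (z \in nb a)) => //= zna.
    case: (boolP (z \in Ys)) => zY; last by rewrite andbF.
    exfalso; move: nga; rewrite /GP => /existsPn /(_ z); rewrite zY.
    by move: zna; rewrite inE => ->.
  by move=> eq; move: h2; rewrite eq ltnNge leq_pmull.
have ha := typeI ga.
have sub : nb v :&: nb a \subset nb a :\: Ys.
  apply/subsetP => z; rewrite in_setI in_setD => /andP [evz eaz]; rewrite eaz andbT.
  apply/negP => zY; move: ngv; rewrite /GP => /existsPn /(_ z); rewrite zY.
  by move: evz; rewrite inE => ->.
have c3 := subset_leq_card sub.
have c4 : (#|nb v :&: nb a| + #|nb v :\: nb a| = #|nb v|)%N by rewrite cardsID.
exact: arG (hdeg v) hdelta hk q4 c3 c4 ha h1.
Qed.

Lemma As_p0 : p0 \in As.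
Proof.
have hD := D_ge; have kp := Kc_pos.
rewrite inE p0P /= (_ : B :\: nb p0 = set0) ?cards0 ?muln0; first by rewrite -/D; move: hD; nia.
by rewrite setDv.
Qed.

Lemma allGP x : x \in P -> GP x.
Proof.
move=> xP.
have cl : closed e Gd.
  move=> u v euv; apply/idP/idP; first exact: Gstep.
  by apply: Gstep; rewrite esym.
have hD := D_ge; have kp := Kc_pos.
have G0 : Gd p0.
  apply/orP; left; rewrite p0P /=.
  have : (0 < #|B|)%N by move: hD; rewrite -/D; nia.
  rewrite card_gt0 => /set0Pn [z zB].
  have ez : e p0 z by move: zB; rewrite /B inE.
  apply/existsP; exists z; rewrite ez andbT inE (nbPQ p0P ez) /=.
  by apply/existsP; exists p0; rewrite As_p0 ez.
have Gx : x \in Gd by rewrite -(closed_connect cl (conn p0 x)); exact: G0.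
move: Gx; rewrite unfold_in => /orP [/andP [] //|/andP [xQ _]].
by case: (PQF xP xQ).
Qed.

Lemma final_count :
  (#|[set x in P | q * #|nb x| <= (q - 1) * D]| * delta <= 6 * Kc * #|Q|)%N.
Proof.
set U := [set x in P | _].
have hk := Kc_ge; have kp := Kc_pos.
have h1 := double_count U Ys (fun x y => e x y).
have h2 : (\sum_(y in Ys) #|[set x in U | e x y]| <= #|Ys| * (3 * Kc))%N.
  rewrite -sum_nat_const; apply: leq_sum => y.
  rewrite inE => /andP [_ /existsP [h /andP [hA ehy]]].
  apply: leq_trans (ltnW (closure hA ehy)).
  apply: subset_leq_card; apply/subsetP => x; rewrite !inE => /andP [/andP [xP hx] exy].
  rewrite esym exy andbT; apply/negP => xA.
  move: xA; rewrite ?inE xP /= => hq.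
  have c4 : (#|B :&: nb x| + #|B :\: nb x| = D)%N by rewrite cardsID.
  have c5 : (#|B :&: nb x| <= #|nb x|)%N by apply: subset_leq_card; apply: subsetIr.
  move: hx hq c4 c5 q4; rewrite -/D.
  set d := #|nb x|; set m := #|B :\: nb x|; set w := #|B :&: nb x|.
  move=> d1 d2 d3 d4 d5.
  have f1 : (q * w <= q * d)%N by rewrite leq_mul2l d4 orbT.
  have f2 : (q * w + q * m = q * D)%N by rewrite -mulnDr d3.
  have f3 : ((q - 1) * D = q * D - D)%N by rewrite mulnBl mul1n.
  rewrite f3 in d1; lia.
have h3 : (#|U| * delta <= 2 * \sum_(x in U) #|[set y in Ys | e x y]|)%N.
  rewrite big_distrr /= -sum_nat_const; apply: leq_sum => x.
  rewrite inE => /andP [xP _].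
  have ht := typeI (allGP xP).
  have c : (#|nb x :&: Ys| + #|nb x :\: Ys| = #|nb x|)%N by rewrite cardsID.
  rewrite (_ : [set y in Ys | e x y] = nb x :&: Ys); last first.
    by apply/setP => z; rewrite !inE andbC.
  move: (hdeg x) hdelta hk ht c; lia.
have hY : (#|Ys| <= #|Q|)%N.
  by apply: subset_leq_card; apply/subsetP => y; rewrite inE => /andP [].
rewrite h1 in h3.
move: h2 h3 hY; set s := (\sum_(y in Ys) _)%N; set a := #|Ys|; set u := #|U|.
move=> d1 d2 d3.
have f1 : (a * (3 * Kc) <= #|Q| * (3 * Kc))%N by rewrite leq_mul2r d3 orbT.
have f2 : (6 * Kc * #|Q| = 2 * (#|Q| * (3 * Kc)))%N by rewrite (mulnC #|Q|) !mulnA.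
rewrite f2; lia.
Qed.

End Comb.

From mathcomp Require Import lra.

Lemma mindeg_le (V : finType) (e : rel V) v : (mindeg e <= deg e v)%N.
Proof.
rewrite /mindeg; have : v \in index_enum V by rewrite mem_index_enum.
elim: (index_enum V) => [//|w r IH]; rewrite inE big_cons => /orP [/eqP <-|/IH h].
  exact: geq_minl.
exact: leq_trans (geq_minr _ _) h.
Qed.

Local Open Scope ring_scope.

Lemma side (R : realFieldType) (V : finType) (e : rel V) (P Q : {set V}) (t q d n : nat)
  (eps C : R) :
  symmetric e -> irreflexive e -> [disjoint P & Q] ->
  (forall u v, e u v -> (u \in P /\ v \in Q) \/ (u \in Q /\ v \in P)) ->
  (0 < t)%N -> ~ has_induced_biclaw e t t -> (4 <= q)%N -> 1 <= q%:R * eps ->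
  (forall v, d <= #|nb e v|)%N -> (6 * Kc t q <= d)%N -> (forall u v, connect e u v) ->
  #|Q| = n -> (6 * Kc t q)%:R <= C -> (0 < d)%N ->
  #|U_low e P eps|%:R <= C / d%:R * n%:R.
Proof.
move=> esym eirr hdis hbip tpos nob q4 hqe hdeg hd conn cQ hKC dpos.
have q1 : (0 < q)%N by apply: leq_trans q4.
have key : (#|U_low e P eps| * d <= 6 * Kc t q * n)%N.
  case: (posnP #|P|) => [P0|Ppos].
    have : (#|U_low e P eps| <= #|P|)%N.
      by apply: subset_leq_card; apply/subsetP => x; rewrite inE => /andP [].
    by rewrite P0 leqn0 => /eqP ->.
  have [p0 p0P hD] := eq_bigmax_cond (fun v => deg e v) Ppos.
  rewrite -cQ; apply: leq_trans (final_count esym eirr hdis hbip tpos nob q1 q4 hdeg hd conn p0P).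
  rewrite leq_mul2r; apply/orP; right; apply: subset_leq_card; apply/subsetP => x.
  rewrite !inE => /andP [xP hx]; rewrite xP /=.
  move: hx; rewrite /maxdeg_in hD => hx.
  rewrite -(ler_nat R) natrM natrM natrB //.
  have D0 : 0 <= (deg e p0)%:R :> R by [].
  have q0 : 0 <= q%:R :> R by [].
  rewrite ?mul1r. move: hx D0 q0 hqe; rewrite /deg.
  set dx := (#|_|%:R : R). set D := (#|_|%:R : R). set qr := (q%:R : R).
  move=> *; nra.
rewrite mulrAC ler_pdivlMr ?ltr0n //.
apply: le_trans (_ : (6 * Kc t q * n)%:R <= _).
  by rewrite -natrM ler_nat.
rewrite natrM; apply: ler_wpM2r => //.
Qed.

Unset Implicit Arguments.

Theorem mainTheorem11 (R : realFieldType) :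
  exists C : nat -> R -> R,
  forall (t : nat) (eps : R), (0 < t)%N -> 0 < eps -> eps < 1 ->
  forall (V : finType) (e : rel V) (X Y : {set V}) (n : nat),
    simple_graph e -> bipartite_parts e X Y -> connected e ->
    #|X| = n -> #|Y| = n ->
    C t eps <= (mindeg e)%:R ->
    ~ has_induced_biclaw e t t ->
    (#|U_low e X eps|%:R <= C t eps / (mindeg e)%:R * n%:R) /\
    (#|U_low e Y eps|%:R <= C t eps / (mindeg e)%:R * n%:R).
Proof.
exists (fun t eps => 6%:R * t%:R * (16%:R / eps) ^+ t).
move=> t eps tpos eps0 eps1 V e X Y n [esym eirr] [hdis [hcov hbip]] conn cX cY.
set C := _ * _ ^+ t; set d := mindeg e => hC nob.
have hdeg : forall v, (d <= #|nb e v|)%N by move=> v; exact: mindeg_le.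
have x1 : 1 <= 16%:R / eps.
  rewrite ler_pdivlMr // mul1r; apply: le_trans (ltW eps1) _; by rewrite ler1n.
have Cge : 16%:R / eps <= C.
  have h1 : 16%:R / eps <= (16%:R / eps) ^+ t.
    case: t tpos {C hC nob} => // t' _; rewrite exprS.
    by rewrite ler_peMr ?exprn_ege1 // (le_trans ler01 x1).
  apply: le_trans h1 _; rewrite /C -[X in X <= _]mul1r; apply: ler_wpM2r.
    by apply: exprn_ge0; apply: le_trans x1.
  by rewrite -natrM ler1n muln_gt0 tpos.
have exq : exists m : nat, 1 <= m%:R * eps.
  exists d; apply: le_trans (_ : 16%:R / eps * eps <= _).
    by rewrite mulfVK ?gt_eqF // ler1n.
  apply: ler_wpM2r; [exact: ltW|exact: le_trans Cge hC].
case: (ex_minnP exq) => q0 hq0 hmin.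
have q0pos : (0 < q0)%N by case: q0 hq0 {hmin} => //; rewrite mul0r ler10.
have hlt : q0.-1%:R * eps < 1.
  rewrite ltNge; apply/negP => h; have := hmin _ h.
  by rewrite leqNgt ltn_predL q0pos.
have q0e : q0%:R * eps < 2%:R.
  move: hlt; case: q0 q0pos {hq0 hmin} => // m _ /=.
  rewrite -addn1 natrD mulrDl mul1r => hm.
  by rewrite (_ : 2%:R = 1 + 1 :> R) ?ltrD // natrD.
set q := (4 * q0)%N.
have q4 : (4 <= q)%N by rewrite /q leq_pmulr.
have hqe : 1 <= q%:R * eps.
  rewrite /q natrM -mulrA; apply: le_trans hq0 _.
  by rewrite ler_peMl // ?ler1n // mulr_ge0 // ltW.
have h2q : (2 * q)%:R <= 16%:R / eps :> R.
  rewrite ler_pdivlMr // /q mulnA natrM -mulrA.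
  have -> : 16%:R = (2 * 4)%:R * 2%:R :> R by rewrite -natrM.
  by rewrite ler_pM2l ?ltr0n // ltW.
have hKC : (6 * Kc t q)%:R <= C.
  rewrite /C /Kc !natrM mulrA natrX; apply: ler_wpM2l; first by rewrite mulr_ge0.
  by rewrite ler_pXn2r // nnegrE // (le_trans ler01 x1).
have dpos : (0 < d)%N.
  have := Kc_pos tpos (leq_trans (isT : (0 < 4)%N) q4).
  move=> k0; rewrite -(ltr_nat R); apply: lt_le_trans hC.
  apply: lt_le_trans hKC; rewrite ltr0n muln_gt0 k0 //.
have hd : (6 * Kc t q <= d)%N by rewrite -(ler_nat R) (le_trans hKC hC).
split.
- exact: (side esym eirr hdis hbip tpos nob q4 hqe hdeg hd conn cY hKC dpos).
- apply: (side esym eirr (Q := X) _ _ tpos nob q4 hqe hdeg hd conn cX hKC dpos).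
    by rewrite disjoint_sym.
  by move=> u v /hbip [] [] ? ?; [right|left].
Qed.
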